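(* Fix $s>0$. For each $\delta\in(0,\delta_0)$ and each $\rho\in(\delta/\delta_0,1)$ there exists a constant $c_3=c_3(\delta,\rho)>0$ such that for every integer $n\ge1$ and every partition $\lambda=1^{n_1}2^{n_2}\cdots$ of $n$, \[ \mathsf L_{[0,\delta n^{5/4}]}\le c_3\,\rho^{n+1}. \]
   Context: For integers $a,i\ge1$ let $f_{a,i}=\frac1{2i}\sum_{d\mid i,\ d\text{ odd}}\mu(d)(2a)^{i/d}$ ($\mu$ the Möbius function; sum over positive odd divisors of $i$), a positive integer, and define $g_{a,i}$ by $f_{a,i}=\frac{(2a)^i}{2i}g_{a,i}$. Let $c_1>0$ be a fixed constant such that $e^{-c_1(2a)^{-2i/3}}\le g_{a,i}\le e^{c_1(2a)^{-2i/3}}$ for all $a,i\ge1$ (e.g. $c_1=4$). Fix $s>0$; for each $n\ge1$ let $t=t_n\in(0,1)$ be the unique solution in $(0,1)$ of $\frac{4t}{(1+t)^2}=e^{-s/\sqrt n}$, i.e. $t=\frac{1-\sqrt{1-e^{-s/\sqrt n}}}{1+\sqrt{1-e^{-s/\sqrt n}}}$. Set $\delta_0=\left[\sup_{n\ge1}\left(n^{1/4}\log(1/t_n)\,e^{(c_1/4)+1}\right)\right]^{-1}$ (a positive number). Given a partition $\lambda$ of $n$ with $n_i$ parts of size $i$, for $a,i\ge1$ let \[ \mathsf K_{a,i}=\sum_{\nu=0}^{n_i}\frac1{2^{n_i}}\binom{n_i}{\nu}\frac{(f_{a,i}-\nu+n_i-1)!}{(f_{a,i}-\nu)!\,f_{a,i}^{\,n_i-1}},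 \] equivalently $\mathsf K_{a,i}=\frac{n_i!}{(2f_{a,i})^{n_i}}[x^{n_i}]\left(\frac{1+x}{1-x}\right)^{f_{a,i}}$ (here the ratio of factorials is the polynomial $\prod_{k=1}^{n_i-1}(f_{a,i}-\nu+k)$ when $n_i\ge1$, and $\mathsf K_{a,i}=1$ when $n_i=0$). For $A\subseteq\mathbb R$ define \[ \mathsf L_A=\frac{\log^{n+1}(1/t)}{n!}\sum_{a\in A\cap\{1,2,3,\dots\}}a^n t^a\prod_{1\le i\le n}g_{a,i}^{n_i}\mathsf K_{a,i}. \] *)

(* Defs.v *)
From Stdlib Require Import Reals.
From Coquelicot Require Import Coquelicot.
From mathcomp Require Import ssreflect ssrfun ssrbool eqtype ssrnat seq div prime binomial.

Open Scope R_scope.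

Definition mobius (d : nat) : R :=
  if all (fun p => logn p d == 1%N) (primes d) then (-1) ^ size (primes d) else 0.

Definition sumR (l : seq nat) (F : nat -> R) : R := foldr (fun x acc => F x + acc) 0 l.
Definition prodR (l : seq nat) (F : nat -> R) : R := foldr (fun x acc => F x * acc) 1 l.

Definition f_ai (a i : nat) : R :=
  / (2 * INR i) * sumR [seq d <- divisors i | odd d]
                       (fun d => mobius d * (2 * INR a) ^ (i %/ d)).

(* f_{a,i} = (2a)^i/(2i) * g_{a,i} *)
Definition g_ai (a i : nat) : R := f_ai a i * (2 * INR i) / (2 * INR a) ^ i.

(* K_{a,i} for multiplicity ni; the factorial ratio is the polynomial
   prod_{k=1}^{ni-1} (f - nu + k); K = 1 when ni = 0. *)
Definition K_ai (a i ni : nat) : R :=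
  match ni with
  | O => 1
  | S m => sumR (iota 0 ni.+1)
             (fun nu => / 2 ^ ni * INR 'C(ni, nu)
                        * prodR (iota 1 m) (fun k => f_ai a i - INR nu + INR k)
                        / (f_ai a i) ^ m)
  end.

Definition t_n (s : R) (n : nat) : R :=
  (1 - sqrt (1 - exp (- s / sqrt (INR n)))) / (1 + sqrt (1 - exp (- s / sqrt (INR n)))).

Definition delta0 (s c1 : R) : R :=
  / real (Lub_Rbar (fun x => exists n : nat, (0 < n)%N /\
            x = Rpower (INR n) (/ 4) * ln (/ t_n s n) * exp (c1 / 4 + 1))).

(* A partition of n given by its multiplicities m i (number of parts of size i). *)
Definition is_partition (n : nat) (m : nat -> nat) : Prop :=
  (forall i, (n < i)%N -> m i = 0%N) /\
  sumn [seq (i * m i)%N | i <- iota 1 n] = n.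

(* L_{[0,X]} for the partition with multiplicities m of n (sum over integers
   1 <= a <= X; every such a is at most Z.to_nat (up X)). *)
Definition L_upto (s : R) (n : nat) (m : nat -> nat) (X : R) : R :=
  ln (/ t_n s n) ^ (n + 1) / INR (Stdlib.Arith.Factorial.fact n) *
  sumR (iota 1 (Z.to_nat (up X)))
       (fun a => if Rle_dec (INR a) X then
                   INR a ^ n * t_n s n ^ a *
                   prodR (iota 1 n) (fun i => g_ai a i ^ (m i) * K_ai a i (m i))
                 else 0).

(* Main.v *)
Require Import Defs.
From Stdlib Require Import Reals Lra Lia ZArith.
From Coquelicot Require Import Coquelicot.
From mathcomp Require Import ssreflect ssrfun ssrbool eqtype ssrnat seq div prime binomial.
From mathcomp Require Import bigop.
Open Scope R_scope.

Lemma sumR_le_const (l : seq nat) F B :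
  (forall x, x \in l -> F x <= B) -> sumR l F <= INR (size l) * B.
Proof.
elim: l => [|x l IH] H; first (simpl; lra).
have -> : INR (size (x :: l)) = INR (size l) + 1 by rewrite -S_INR.
rewrite /=.
have h1 := H x (mem_head _ _).
have h2 : sumR l F <= INR (size l) * B.
  apply: IH => y hy; apply: H; by rewrite in_cons hy orbT.
lra.
Qed.

Lemma sumR_abs (l : seq nat) F : Rabs (sumR l F) <= sumR l (fun x => Rabs (F x)).
Proof.
elim: l => [|x l IH] /=; first (rewrite Rabs_R0; lra).
have := Rabs_triang (F x) (sumR l F); lra.
Qed.

Lemma sumR_le (l : seq nat) F G :
  (forall x, x \in l -> F x <= G x) -> sumR l F <= sumR l G.
Proof.
elim: l => [|x l IH] H /=; first lra.
have h1 := H x (mem_head _ _).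
have h2 : sumR l F <= sumR l G.
  apply: IH => y hy; apply: H; by rewrite in_cons hy orbT.
lra.
Qed.

Lemma sumR_scal (l : seq nat) c F : sumR l (fun x => c * F x) = c * sumR l F.
Proof. elim: l => [|x l IH] /=; [ring | rewrite IH; ring]. Qed.

Lemma prodR_abs (l : seq nat) F : Rabs (prodR l F) = prodR l (fun x => Rabs (F x)).
Proof.
elim: l => [|x l IH] /=; first by rewrite Rabs_R1.
by rewrite Rabs_mult IH.
Qed.

Lemma prodR_nonneg (l : seq nat) F :
  (forall x, x \in l -> 0 <= F x) -> 0 <= prodR l F.
Proof.
elim: l => [|x l IH] H /=; first lra.
apply: Rmult_le_pos; first exact: H (mem_head _ _).
apply: IH => y hy; apply: H; by rewrite in_cons hy orbT.
Qed.

Lemma prodR_le (l : seq nat) F G :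
  (forall x, x \in l -> 0 <= F x <= G x) -> prodR l F <= prodR l G.
Proof.
elim: l => [|x l IH] H /=; first lra.
have h1 := H x (mem_head _ _).
have H' : forall y, y \in l -> 0 <= F y <= G y.
  move=> y hy; apply: H; by rewrite in_cons hy orbT.
have h2 := IH H'.
have h3 : 0 <= prodR l F by apply: prodR_nonneg => y /H' [].
apply: Rmult_le_compat; lra.
Qed.

Lemma prodR_mul (l : seq nat) F G :
  prodR l (fun x => F x * G x) = prodR l F * prodR l G.
Proof. elim: l => [|x l IH] /=; [ring | rewrite IH; ring]. Qed.

Lemma prodR_pow (l : seq nat) c h :
  prodR l (fun x => c ^ h x) = c ^ sumn (map h l).
Proof. elim: l => [|x l IH] /=; [done | by rewrite IH pow_add]. Qed.

Lemma prodR_const (l : seq nat) c : prodR l (fun _ => c) = c ^ size l.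
Proof. elim: l => [|x l IH] /=; [done | by rewrite IH]. Qed.

Lemma sumn_map_le (l : seq nat) h x : x \in l -> (h x <= sumn (map h l))%N.
Proof.
elim: l => [|y l IH] //=; rewrite in_cons => /orP [/eqP -> | hx].
  exact: leq_addr.
apply: leq_trans (IH hx) _; exact: leq_addl.
Qed.

Lemma sumR_INR (l : seq nat) F : sumR l (fun x => INR (F x)) = INR (\sum_(x <- l) F x)%N.
Proof.
elim: l => [|x l IH] /=; first by rewrite big_nil.
by rewrite big_cons IH -plus_INR.
Qed.

Lemma sumR_binom m : sumR (iota 0 m.+1) (fun nu => INR 'C(m, nu)) = 2 ^ m.
Proof.
rewrite sumR_INR.
have -> : (\sum_(x <- iota 0 m.+1) 'C(m, x))%N = (2 ^ m)%N.
  have := expnDn 1 1 m. rewrite addn1 => ->.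
  rewrite -(big_mkord xpredT (fun i => 'C(m, i) * (1 ^ (m - i) * 1 ^ i))%N).
  rewrite /index_iota subn0.
  apply: eq_bigr => i _. by rewrite !exp1n !muln1.
elim: m => [|m IH] //=. by rewrite expnS -multE mult_INR IH.
Qed.

Lemma exp_pow_n x n : exp x ^ n = exp (x * INR n).
Proof.
elim: n => [|n IH]; first by rewrite /= Rmult_0_r exp_0.
change (exp x ^ n.+1) with (exp x * exp x ^ n).
rewrite IH -exp_plus S_INR. f_equal. ring.
Qed.

Lemma onepx_pow x n : 0 <= x -> (1 + x) ^ n <= exp (x * INR n).
Proof.
move=> hx. rewrite -exp_pow_n. apply: pow_incr. have := exp_ineq1_le x. lra.
Qed.

Lemma fact_bound n : INR n ^ n <= exp (INR n) * INR (Factorial.fact n).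
Proof.
have hf : 0 < INR (Factorial.fact n) by apply: lt_0_INR; apply: Factorial.lt_O_fact.
have h := exp_ge_taylor (INR n) n (pos_INR n).
have h2 : INR n ^ n / INR (Factorial.fact n) <= sum_f_R0 (fun k => INR n ^ k / INR (Factorial.fact k)) n.
  case: n hf h => [|n] hf h; first by simpl; lra.
  set f := (fun k => _).
  change (sum_f_R0 f n.+1) with (sum_f_R0 f n + f n.+1).
  have : 0 <= sum_f_R0 f n.
    apply: cond_pos_sum => k. apply: Rdiv_le_0_compat.
    apply: pow_le; apply: pos_INR. apply: lt_0_INR; apply: Factorial.lt_O_fact.
  rewrite /f; lra.
have h3 : INR n ^ n / INR (Factorial.fact n) <= exp (INR n) by lra.
apply (Rmult_le_compat_r (INR (Factorial.fact n))) in h3; last lra.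
move: h3. rewrite /Rdiv Rmult_assoc Rinv_l; [lra | apply: Rgt_not_eq; lra].
Qed.

Lemma pow_add_ge x y i : 0 <= x -> 0 <= y -> x ^ i.+1 + y ^ i.+1 <= (x + y) ^ i.+1.
Proof.
move=> hx hy. elim: i => [|i IH]; first by simpl; lra.
change ((x + y) ^ i.+2) with ((x + y) * (x + y) ^ i.+1).
change (x ^ i.+2) with (x * x ^ i.+1).
change (y ^ i.+2) with (y * y ^ i.+1).
have h1 : 0 <= x ^ i.+1 by apply: pow_le.
have h2 : 0 <= y ^ i.+1 by apply: pow_le.
nra.
Qed.
Lemma K_bound a i m : 0 < f_ai a i ->
  Rabs (K_ai a i m) <= ((f_ai a i + INR m) / f_ai a i) ^ m.
Proof.
move=> hf. set f := f_ai a i in hf *.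
have hge1 : 1 <= (f + INR m) / f.
  have h : 0 <= INR m / f by apply: Rdiv_le_0_compat; [apply: pos_INR | lra].
  have -> : (f + INR m) / f = 1 + INR m / f by field; apply: Rgt_not_eq; lra.
  lra.
case: m hge1 => [|m'] hge1.
  rewrite /K_ai Rabs_R1 /=; lra.
rewrite /K_ai -/f.
set M := m'.+1.
apply: Rle_trans (_ : ((f + INR M) / f) ^ m' <= _); last first.
  apply: Rle_pow => //; rewrite /M; lia.
apply: Rle_trans; first exact: sumR_abs.
set c := / 2 ^ M * (f + INR M) ^ m' * / f ^ m'.
have hfm : 0 < f ^ m' by apply: pow_lt.
have h2M : 0 < 2 ^ M by apply: pow_lt; lra.
apply: Rle_trans (_ : sumR (iota 0 M.+1) (fun nu => c * INR 'C(M, nu)) <= _).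
  apply: sumR_le => nu hnu.
  have hnuM : INR nu <= INR M.
    apply: le_INR. move: hnu; rewrite mem_iota => /andP [_ h]. apply/leP. 
    move: h; rewrite add0n ltnS. done.
  set P := prodR _ _.
  have hP : Rabs P <= (f + INR M) ^ m'.
    rewrite /P prodR_abs.
    have -> : (f + INR M) ^ m' = prodR (iota 1 m') (fun _ => f + INR M).
      by rewrite prodR_const size_iota.
    apply: prodR_le => k hk.
    have hkM : INR k <= INR M.
      apply: le_INR. move: hk; rewrite mem_iota => /andP [_ h]. apply/leP.
      move: h; rewrite add1n ltnS /M => h. exact: leqW.
    have := pos_INR k; have := pos_INR nu.
    split; first exact: Rabs_pos.
    apply: Rabs_le; lra.
  have hA : 0 <= / 2 ^ M * INR 'C(M, nu).
    apply: Rmult_le_pos; [apply: Rlt_le; apply: Rinv_0_lt_compat; lra | apply: pos_INR].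
  rewrite /Rdiv Rabs_mult Rabs_mult Rabs_inv (Rabs_pos_eq (/ 2 ^ M * INR 'C(M, nu))) //.
  rewrite (Rabs_pos_eq (f ^ m')); last lra.
  have hB : 0 < / f ^ m' by apply: Rinv_0_lt_compat.
  have -> : c * INR 'C(M, nu) = / 2 ^ M * INR 'C(M, nu) * (f + INR M) ^ m' * / f ^ m'.
    rewrite /c; ring.
  apply: Rmult_le_compat_r; first lra.
  apply: Rmult_le_compat_l; lra.
rewrite sumR_scal sumR_binom /c /Rdiv Rpow_mult_distr pow_inv.
right. field. split; apply: Rgt_not_eq; lra.
Qed.

Lemma I_bound (a i m n : nat) (f g K G : R) :
  (0 < a)%N -> (0 < i)%N -> (0 < n)%N -> (i * m <= n)%N -> 0 < f ->
  g = f * (2 * INR i) / (2 * INR a) ^ i -> g <= G -> 1 <= G ->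
  Rabs K <= ((f + INR m) / f) ^ m ->
  INR a ^ (i * m) * Rabs (g ^ m * K) <= (INR a * G + INR n) ^ (i * m).
Proof.
move=> ha hi hn him hf hg hgG hG hK.
have ha' : 1 <= INR a by apply: (le_INR 1); apply/leP.
have hi' : 1 <= INR i by apply: (le_INR 1); apply/leP.
have hn' : 1 <= INR n by apply: (le_INR 1); apply/leP.
have hai : 0 < INR a ^ i by apply: pow_lt; lra.
have h2i : 0 < 2 ^ i by apply: pow_lt; lra.
have hgpos : 0 < g.
  rewrite hg. apply: Rdiv_lt_0_compat; first nra. apply: pow_lt; lra.
have hm := pos_INR m.
set base := INR a ^ i * g + 2 * INR i * INR m / 2 ^ i.
have hbase : INR a ^ i * g * ((f + INR m) / f) = base.
  rewrite /base hg Rpow_mult_distr. field.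
  repeat split; apply: Rgt_not_eq; lra.
have hb0 : 0 <= base.
  rewrite /base. have : 0 <= 2 * INR i * INR m / 2 ^ i.
    apply: Rdiv_le_0_compat; nra.
  nra.
have hpm : forall x : R, x ^ (i * m)%N = (x ^ i) ^ m.
  move=> x. by rewrite -multE pow_mult.
rewrite !hpm Rabs_mult.
have hK0 : 0 <= Rabs K by apply: Rabs_pos.
apply: Rle_trans (_ : base ^ m <= _).
  rewrite -hbase !Rpow_mult_distr (Rabs_pos_eq (g ^ m)); last by apply: pow_le; lra.
  have h1 : 0 <= (INR a ^ i) ^ m by apply: pow_le; lra.
  have h2 : 0 <= g ^ m by apply: pow_le; lra.
  rewrite -Rmult_assoc. apply: Rmult_le_compat_l; first nra. by rewrite -Rpow_mult_distr.
apply: pow_incr. split => //.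
have hGi : G <= G ^ i.
  have := Rle_pow G 1 i hG. rewrite pow_1. apply. by apply/leP.
have h2le : 2 <= 2 ^ i.
  have := Rle_pow 2 1 i. rewrite pow_1. apply; [lra | by apply/leP].
have hnim : INR i * INR m <= INR n.
  rewrite -mult_INR. apply: le_INR. apply/leP. by rewrite multE.
have hsec : 2 * INR i * INR m / 2 ^ i <= INR n.
  apply: Rle_trans (_ : INR i * INR m <= _) => //.
  apply/Rle_div_l => //. have : 0 <= INR i * INR m by nra. nra.
have hfirst : INR a ^ i * g <= (INR a * G) ^ i.
  rewrite Rpow_mult_distr. have : 0 <= G ^ i by apply: pow_le; lra. nra.
have hni : INR n <= INR n ^ i.
  have := Rle_pow (INR n) 1 i hn'. rewrite pow_1. apply. by apply/leP.
apply: Rle_trans (_ : (INR a * G) ^ i + INR n <= _).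
  rewrite /base; lra.
have haG : 0 <= INR a * G by nra.
case: i {him hi' hai h2i hbase hpm hGi h2le hnim hsec hfirst hni base hb0 hg} hi => // i' _.
have := pow_add_ge (INR a * G) (INR n) i' haG (ltac:(lra)).
have : INR n <= INR n ^ i'.+1.
  have := Rle_pow (INR n) 1 i'.+1 hn'. rewrite pow_1. apply. by apply/leP.
lra.
Qed.

Lemma f_pos a i : (0 < a)%N -> (0 < i)%N -> 0 < g_ai a i -> 0 < f_ai a i.
Proof.
move=> ha hi hg.
have ha' : 1 <= INR a by apply: (le_INR 1); apply/leP.
have hi' : 1 <= INR i by apply: (le_INR 1); apply/leP.
have hp : 0 < (2 * INR a) ^ i by apply: pow_lt; lra.
have -> : f_ai a i = g_ai a i * (2 * INR a) ^ i / (2 * INR i).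
  rewrite /g_ai. field. split; apply: Rgt_not_eq; lra.
apply: Rdiv_lt_0_compat; [nra | lra].
Qed.

Lemma A_bound (n : nat) (m : nat -> nat) (a : nat) (t G : R) :
  (0 < n)%N -> (0 < a)%N -> is_partition n m -> 0 < t <= 1 -> 1 <= G ->
  (forall i, (0 < i)%N -> 0 < g_ai a i <= G) ->
  Rabs (INR a ^ n * t ^ a *
        prodR (iota 1 n) (fun i => g_ai a i ^ m i * K_ai a i (m i)))
  <= (INR a * G + INR n) ^ n.
Proof.
move=> hn ha [_ hsum] ht hG hgi.
have ha' : 1 <= INR a by apply: (le_INR 1); apply/leP.
have hta : t ^ a <= 1.
  rewrite -(pow1 a). apply: pow_incr. lra.
have hta0 : 0 <= t ^ a by apply: pow_le; lra.
have hP0 : 0 <= Rabs (prodR (iota 1 n) (fun i => g_ai a i ^ m i * K_ai a i (m i))) by apply: Rabs_pos.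
have han : 0 <= INR a ^ n by apply: pow_le; lra.
rewrite !Rabs_mult (Rabs_pos_eq (INR a ^ n)) // (Rabs_pos_eq (t ^ a)) //.
apply: Rle_trans (_ : INR a ^ n * Rabs (prodR (iota 1 n) (fun i => g_ai a i ^ m i * K_ai a i (m i))) <= _).
  apply: Rmult_le_compat_r => //. nra.
have hpow : forall x, x ^ n = prodR (iota 1 n) (fun i => x ^ (i * m i)%N).
  move=> x. by rewrite prodR_pow hsum.
rewrite (hpow (INR a)) (hpow (INR a * G + INR n)) prodR_abs -prodR_mul.
apply: prodR_le => i hi.
have hi0 : (0 < i)%N by move: hi; rewrite mem_iota => /andP [].
have [hg0 hgG] := hgi i hi0.
split.
  apply: Rmult_le_pos; [apply: pow_le; lra | apply: Rabs_pos].
apply: (I_bound a i (m i) n (f_ai a i)) => //.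
- have := sumn_map_le (iota 1 n) (fun i => (i * m i)%N) i hi. by rewrite hsum.
- exact: f_pos.
- exact: K_bound (f_pos a i ha hi0 hg0).
Qed.

Lemma exp_mono x y : x <= y -> exp x <= exp y.
Proof.
move=> h. case: (Rle_lt_or_eq_dec _ _ h) => h'.
  apply: Rlt_le; exact: exp_increasing.
by rewrite h'; lra.
Qed.

Definition Gfun (c1 : R) (a : nat) : R := if (8 <= a)%N then exp (c1 / 4) else exp c1.

Lemma Rpower_bound1 a i : (0 < a)%N -> (0 < i)%N ->
  Rpower (2 * INR a) (- (2 * INR i / 3)) <= 1.
Proof.
move=> ha hi.
have ha' : 1 <= INR a by apply: (le_INR 1); apply/leP.
have hi' : 1 <= INR i by apply: (le_INR 1); apply/leP.
have hl : 0 <= ln (2 * INR a).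
  rewrite -ln_1. apply: ln_le; lra.
rewrite /Rpower -exp_0. apply: exp_mono. nra.
Qed.

Lemma Rpower_bound8 a i : (8 <= a)%N -> (0 < i)%N ->
  Rpower (2 * INR a) (- (2 * INR i / 3)) <= / 4.
Proof.
move=> ha hi.
have ha' : 8 <= INR a.
  have -> : 8 = INR 8 by simpl; ring.
  apply: le_INR; apply/leP; done.
have hi' : 1 <= INR i by apply: (le_INR 1); apply/leP.
have hl2 : 0 < ln 2 by rewrite -ln_1; apply: ln_increasing; lra.
have h16 : ln 16 = 4 * ln 2.
  have -> : 16 = 2 ^ 4 by simpl; ring.
  by rewrite ln_pow; [simpl; ring | lra].
have hl : ln 16 <= ln (2 * INR a) by apply: ln_le; lra.
have h4 : / 4 = exp (- (2 * ln 2)).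
  rewrite exp_Ropp. f_equal.
  have -> : 2 * ln 2 = ln 2 + ln 2 by ring.
  rewrite exp_plus exp_ln; lra.
rewrite h4 /Rpower. apply: exp_mono. nra.
Qed.

Lemma g_le_G (c1 : R) a i : 0 < c1 -> (0 < a)%N -> (0 < i)%N ->
  g_ai a i <= exp (c1 * Rpower (2 * INR a) (- (2 * INR i / 3))) ->
  g_ai a i <= Gfun c1 a.
Proof.
move=> hc ha hi hg. apply: Rle_trans hg _. rewrite /Gfun.
case: ifP => h8; apply: exp_mono.
  have := Rpower_bound8 a i h8 hi. nra.
have := Rpower_bound1 a i ha hi. nra.
Qed.

Lemma Gfun_ge1 c1 a : 0 < c1 -> 1 <= Gfun c1 a.
Proof.
move=> hc. rewrite /Gfun -exp_0. case: ifP => _; apply: exp_mono; lra.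
Qed.

Lemma aG_bound c1 a X : 0 < c1 -> (0 < a)%N -> INR a <= X ->
  INR a * Gfun c1 a <= X * exp (c1 / 4) + 8 * exp c1.
Proof.
move=> hc ha hX.
have ha' : 1 <= INR a by apply: (le_INR 1); apply/leP.
have e1 := exp_pos (c1 / 4). have e2 := exp_pos c1.
rewrite /Gfun. case: ifP => h8.
  nra.
have : INR a <= 8.
  have -> : 8 = INR 8 by simpl; ring.
  apply: (le_INR a 8). apply/leP. move/negbT: h8. rewrite -ltnNge. move=> h. exact: ltnW.
nra.
Qed.

Lemma L_bound (s c1 : R) (n : nat) (m : nat -> nat) (X : R) :
  0 < c1 -> (0 < n)%N -> is_partition n m -> 0 < t_n s n <= 1 ->
  0 <= ln (/ t_n s n) -> 0 <= X ->
  (forall a i : nat, (0 < a)%N -> (0 < i)%N ->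
        exp (- c1 * Rpower (2 * INR a) (- (2 * INR i / 3))) <= g_ai a i
        <= exp (c1 * Rpower (2 * INR a) (- (2 * INR i / 3)))) ->
  L_upto s n m X <= ln (/ t_n s n) ^ (n + 1) / INR (Factorial.fact n) *
     (INR (Z.to_nat (up X)) * (X * exp (c1 / 4) + 8 * exp c1 + INR n) ^ n).
Proof.
move=> hc hn hp ht hl hX hg.
rewrite /L_upto.
apply: Rmult_le_compat_l.
  apply: Rdiv_le_0_compat; first by apply: pow_le.
  apply: lt_0_INR; apply: Factorial.lt_O_fact.
set Y := X * exp (c1 / 4) + 8 * exp c1 + INR n.
apply: (Rle_trans _ (INR (size (iota 1 (Z.to_nat (up X)))) * Y ^ n)); last by rewrite size_iota; right.
apply: sumR_le_const => a ha.
have ha0 : (0 < a)%N by move: ha; rewrite mem_iota => /andP [].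
have hY0 : 0 <= Y.
  rewrite /Y; have := exp_pos (c1/4); have := exp_pos c1; have := pos_INR n. nra.
case: Rle_dec => haX; last by apply: pow_le.
apply: Rle_trans; first exact: Rle_abs.
apply: Rle_trans; first apply: (A_bound n m a (t_n s n) (Gfun c1 a)) => //.
- exact: Gfun_ge1.
- move=> i hi. have [h1 h2] := hg a i ha0 hi. split.
    apply: Rlt_le_trans h1. exact: exp_pos.
  exact: g_le_G.
apply: pow_incr. split.
  have := Gfun_ge1 c1 a hc. have := pos_INR a. have := pos_INR n. nra.
have := aG_bound c1 a X hc ha0 haX. rewrite /Y. lra.
Qed.

Lemma exp_ge_sq y : 0 <= y -> y ^ 2 / 2 <= exp y.
Proof.
move=> hy. have h := exp_ge_taylor y 2 hy.
have : sum_f_R0 (fun k => y ^ k / INR (Factorial.fact k)) 2 = 1 + y + y ^ 2 / 2.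
  simpl. field.
nra.
Qed.

Lemma final_bound (C d p rho M : R) : 0 < C -> 0 < d -> 0 < p -> p < rho -> rho < 1 -> 0 < M ->
  exists c3, 0 < c3 /\ forall (n : nat) (w : R), 1 <= w -> w ^ 4 = INR n ->
    C * (d * INR n * w + 1) * (p + M / w) ^ n <= c3 * rho ^ (n + 1).
Proof.
move=> hC hd hp hpr hr1 hM.
set r' := (p + rho) / 2.
have hr'0 : 0 < r' by rewrite /r'; lra.
set K := M / r'.
have hK : 0 < K by apply: Rdiv_lt_0_compat.
set q := r' / rho.
have hq0 : 0 < q by apply: Rdiv_lt_0_compat; lra.
have hq1 : q < 1.
  have -> : q = 1 - (rho - r') / rho by rewrite /q; field; apply: Rgt_not_eq; lra.
  have : 0 < (rho - r') / rho by apply: Rdiv_lt_0_compat; rewrite /r'; lra.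
  lra.
set b := - ln q.
have hb : 0 < b.
  rewrite /b. have : ln q < 0 by rewrite -ln_1; apply: ln_increasing.
  lra.
exists (C * (d + 1) * (8 / b ^ 2) * exp (8 * K ^ 4 / b ^ 3) / rho).
split.
  apply: Rdiv_lt_0_compat; last lra.
  apply: Rmult_lt_0_compat; last exact: exp_pos.
  apply: Rmult_lt_0_compat; first nra.
  apply: Rdiv_lt_0_compat; first lra. apply: pow_lt; lra.
move=> n w hw hn.
have hw0 : 0 < w by lra.
have hw4 : 1 <= w ^ 4 by rewrite -(pow1 4); apply: pow_incr; lra.
have hstep1 : (p + M / w) ^ n <= r' ^ n * exp (K * w ^ 3).
  apply: Rle_trans (_ : (r' * (1 + K / w)) ^ n <= _).
    apply: pow_incr. split.
      have : 0 < M / w by apply: Rdiv_lt_0_compat.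
      lra.
    have -> : r' * (1 + K / w) = r' + M / w.
      rewrite /K. field. split; apply: Rgt_not_eq; lra.
    rewrite /r'; lra.
  rewrite Rpow_mult_distr. apply: Rmult_le_compat_l; first by apply: pow_le; lra.
  apply: Rle_trans; first apply: onepx_pow.
    apply: Rlt_le; apply: Rdiv_lt_0_compat => //.
  rewrite -hn. right. f_equal. simpl. field. apply: Rgt_not_eq; lra.
have hstep2 : r' ^ n = rho ^ n * exp (- b * w ^ 4).
  have -> : r' = rho * q by rewrite /q; field; apply: Rgt_not_eq; lra.
  rewrite Rpow_mult_distr. f_equal.
  rewrite /b Ropp_involutive -{1}(exp_ln q) // exp_pow_n hn.
  done.
have hstep3 : K * w ^ 3 - b * w ^ 4 <= 8 * K ^ 4 / b ^ 3 - b * w ^ 4 / 2.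
  have hw3 : 0 <= w ^ 3 by apply: pow_le; lra.
  have hT : 0 <= 8 * K ^ 4 / b ^ 3.
    apply: Rdiv_le_0_compat. have : 0 <= K ^ 4 by apply: pow_le; lra. lra.
    apply: pow_lt; lra.
  case: (Rle_lt_dec (2 * K / b) w) => hcase.
    have : 2 * K <= b * w.
      have -> : 2 * K = (2 * K / b) * b by field; apply: Rgt_not_eq; lra.
      nra.
    move=> h. have : K * w ^ 3 <= b * w ^ 4 / 2.
      have -> : w ^ 4 = w * w ^ 3 by simpl; ring.
      nra.
    lra.
  have h1 : w ^ 3 <= (2 * K / b) ^ 3 by apply: pow_incr; lra.
  have h2 : K * (2 * K / b) ^ 3 = 8 * K ^ 4 / b ^ 3.
    field. apply: Rgt_not_eq; lra.
  have : K * w ^ 3 <= 8 * K ^ 4 / b ^ 3 by rewrite -h2; nra.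
  have : 0 <= b * w ^ 4 by nra.
  lra.
have hstep4 : d * INR n * w + 1 <= (d + 1) * w ^ 8.
  rewrite -hn.
  have h5 : w ^ 4 * w <= w ^ 8.
    have -> : w ^ 8 = w ^ 4 * w ^ 4 by simpl; ring.
    apply: Rmult_le_compat_l; [lra | ].
    have := Rle_pow w 1 4 hw. rewrite pow_1. apply. lia.
  have h8 : 1 <= w ^ 8 by rewrite -(pow1 8); apply: pow_incr; lra.
  nra.
have hstep5 : w ^ 8 * exp (- (b * w ^ 4 / 2)) <= 8 / b ^ 2.
  set y := b * w ^ 4 / 2.
  have hy : 0 <= y by rewrite /y; nra.
  have := exp_ge_sq y hy.
  have hy2 : y ^ 2 = b ^ 2 * w ^ 8 / 4 by rewrite /y; simpl; field.
  rewrite hy2 => h.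
  have hb2 : 0 < b ^ 2 by apply: pow_lt.
  have he : exp (- y) * exp y = 1 by rewrite -exp_plus Rplus_opp_l exp_0.
  have hey : 0 < exp (- y) by apply: exp_pos.
  apply: (Rmult_le_reg_r (b ^ 2)) => //.
  have -> : 8 / b ^ 2 * b ^ 2 = 8 by field; apply: Rgt_not_eq.
  have : w ^ 8 * exp (- y) * b ^ 2 = exp (- y) * (b ^ 2 * w ^ 8 / 4) * 4 by field.
  nra.
have hpos1 : 0 <= d * INR n * w + 1.
  have := pos_INR n => hn0.
  have : 0 <= d * INR n by apply: Rmult_le_pos; lra.
  nra.
have hpos2 : 0 <= (p + M / w) ^ n.
  apply: pow_le. have : 0 < M / w by apply: Rdiv_lt_0_compat. lra.
have hrn : 0 < rho ^ n by apply: pow_lt; lra.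
have hE : exp (K * w ^ 3) * exp (- b * w ^ 4) <= exp (8 * K ^ 4 / b ^ 3) * exp (- (b * w ^ 4 / 2)).
  rewrite -!exp_plus. apply: exp_mono. lra.
have hfin : (p + M / w) ^ n <= rho ^ n * (exp (8 * K ^ 4 / b ^ 3) * exp (- (b * w ^ 4 / 2))).
  apply: Rle_trans hstep1 _. rewrite hstep2.
  have := exp_pos (K * w ^ 3). have := exp_pos (- b * w ^ 4). nra.
have hw8 : 0 <= w ^ 8 by apply: pow_le; lra.
have hex1 := exp_pos (8 * K ^ 4 / b ^ 3).
have hex2 := exp_pos (- (b * w ^ 4 / 2)).
apply: Rle_trans (_ : C * ((d + 1) * w ^ 8) * (rho ^ n * (exp (8 * K ^ 4 / b ^ 3) * exp (- (b * w ^ 4 / 2)))) <= _).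
  apply: Rmult_le_compat; try nra.
have -> : rho ^ (n + 1)%N = rho ^ n * rho by rewrite pow_add pow_1.
have -> : C * (d + 1) * (8 / b ^ 2) * exp (8 * K ^ 4 / b ^ 3) / rho * (rho ^ n * rho)
  = C * (d + 1) * (8 / b ^ 2) * exp (8 * K ^ 4 / b ^ 3) * rho ^ n.
  field; repeat split; apply: Rgt_not_eq; lra.
have hC1 : 0 < C * (d + 1) by nra.
have : C * ((d + 1) * w ^ 8) * (rho ^ n * (exp (8 * K ^ 4 / b ^ 3) * exp (- (b * w ^ 4 / 2))))
  = (C * (d + 1)) * (exp (8 * K ^ 4 / b ^ 3) * rho ^ n) * (w ^ 8 * exp (- (b * w ^ 4 / 2))) by ring.
move=> ->.
have : 0 < C * (d + 1) * (exp (8 * K ^ 4 / b ^ 3) * rho ^ n).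
  apply: Rmult_lt_0_compat => //. exact: Rmult_lt_0_compat.
move=> hz.
have := Rmult_le_compat_l _ _ _ (Rlt_le _ _ hz) hstep5.
move=> h. apply: Rle_trans h _. right. field; repeat split; apply: Rgt_not_eq; lra.
Qed.

Lemma chain (l w C d e4 e1 p M N Y : R) (n : nat) :
  0 <= l -> l <= C / w -> 1 <= w -> 1 <= INR n -> 0 < C -> 0 < d -> 0 < e4 -> 0 <= e1 ->
  Y = d * INR n * w * e4 + 8 * e1 + INR n ->
  C * d * e4 = p / exp 1 -> M = exp 1 * (C * (8 * e1 + 1)) ->
  0 <= N -> N <= d * INR n * w + 1 ->
  l ^ (n + 1) / INR (Factorial.fact n) * (N * Y ^ n) <= C * (d * INR n * w + 1) * (p + M / w) ^ n.
Proof.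
move=> hl hlC hw hn hC hd he4 he1 hY hp hM hN0 hN.
have hw0 : 0 < w by lra.
have hY0 : 0 <= Y.
  rewrite hY. have : 0 <= d * INR n by nra. move=> h1. have : 0 <= d * INR n * w by nra. nra.
have hfact : 0 < INR (Factorial.fact n) by apply: lt_0_INR; apply: Factorial.lt_O_fact.
have he : 0 < exp 1 := exp_pos 1.
set Z := p / exp 1 + C * (8 * e1 + 1) / w.
have hCw : 0 < C / w by apply: Rdiv_lt_0_compat.
have hlY : l * Y <= INR n * Z.
  apply: Rle_trans (_ : C / w * Y <= _); first by apply: Rmult_le_compat_r.
  have -> : C / w * Y = INR n * (C * d * e4) + (C / w) * (8 * e1 + INR n).
    rewrite hY. field. apply: Rgt_not_eq; lra.
  rewrite hp /Z.
  have -> : C * (8 * e1 + 1) / w = (C / w) * (8 * e1 + 1) by field; apply: Rgt_not_eq; lra.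
  have : (C / w) * (8 * e1 + INR n) <= INR n * ((C / w) * (8 * e1 + 1)).
    have : 8 * e1 + INR n <= INR n * (8 * e1 + 1) by nra.
    nra.
  lra.
have hlY0 : 0 <= l * Y by nra.
have hZ0 : 0 <= Z.
  rewrite /Z. have : 0 <= p / exp 1.
    rewrite -hp. have : 0 < C * d by nra. nra.
  have : 0 <= C * (8 * e1 + 1) / w by apply: Rdiv_le_0_compat; nra.
  lra.
have hpow : (l * Y) ^ n <= exp (INR n) * INR (Factorial.fact n) * Z ^ n.
  apply: Rle_trans (_ : (INR n * Z) ^ n <= _); first by apply: pow_incr.
  rewrite Rpow_mult_distr. apply: Rmult_le_compat_r; first by apply: pow_le.
  exact: fact_bound.
have hEZ : exp (INR n) * Z ^ n = (p + M / w) ^ n.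
  rewrite -(Rmult_1_l (INR n)) -exp_pow_n -Rpow_mult_distr. f_equal.
  rewrite /Z hM. field. split; apply: Rgt_not_eq; lra.
have -> : l ^ (n + 1)%N / INR (Factorial.fact n) * (N * Y ^ n)
  = l * N * ((l * Y) ^ n / INR (Factorial.fact n)).
  rewrite pow_add pow_1 Rpow_mult_distr. field. apply: Rgt_not_eq; lra.
have hq : (l * Y) ^ n / INR (Factorial.fact n) <= (p + M / w) ^ n.
  rewrite -hEZ. apply: (Rmult_le_reg_r (INR (Factorial.fact n))) => //.
  have -> : (l * Y) ^ n / INR (Factorial.fact n) * INR (Factorial.fact n) = (l * Y) ^ n.
    field. apply: Rgt_not_eq; lra.
  lra.
have hq0 : 0 <= (l * Y) ^ n / INR (Factorial.fact n).
  apply: Rdiv_le_0_compat => //. by apply: pow_le.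
have hlC' : l <= C.
  apply: Rle_trans hlC _. apply: (Rmult_le_reg_r w) => //.
  have -> : C / w * w = C by field; apply: Rgt_not_eq; lra.
  nra.
have hlN : l * N <= C * (d * INR n * w + 1).
  apply: Rmult_le_compat => //.
apply: Rmult_le_compat => //. nra.
Qed.

Lemma t_facts s n : 0 < s -> (0 < n)%N -> 0 < t_n s n < 1.
Proof.
move=> hs hn.
have hn' : 0 < INR n by apply: lt_0_INR; apply/ltP.
have hsq : 0 < sqrt (INR n) by apply: sqrt_lt_R0.
have hneg : - s / sqrt (INR n) < 0.
  have : 0 < s / sqrt (INR n) by apply: Rdiv_lt_0_compat.
  rewrite /Rdiv Ropp_mult_distr_l_reverse. lra.
have he1 : exp (- s / sqrt (INR n)) < 1 by rewrite -exp_0; apply: exp_increasing.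
have he0 := exp_pos (- s / sqrt (INR n)).
set u := 1 - exp (- s / sqrt (INR n)).
have hu0 : 0 < u by rewrite /u; lra.
have hr0 : 0 < sqrt u by apply: sqrt_lt_R0.
have hr1 : sqrt u < 1 by rewrite -sqrt_1; apply: sqrt_lt_1_alt; rewrite /u; lra.
rewrite /t_n -/u. split.
  apply: Rdiv_lt_0_compat; lra.
apply/Rlt_div_l; lra.
Qed.

Lemma ell_pos s n : 0 < s -> (0 < n)%N -> 0 < ln (/ t_n s n).
Proof.
move=> hs hn. have [h0 h1] := t_facts s n hs hn.
rewrite ln_Rinv //. have : ln (t_n s n) < 0 by rewrite -ln_1; apply: ln_increasing.
lra.
Qed.

Theorem lemma3p2 (s c1 : R) (hs : 0 < s) (hc1 : 0 < c1)
  (hg : forall a i : nat, (0 < a)%N -> (0 < i)%N ->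
        exp (- c1 * Rpower (2 * INR a) (- (2 * INR i / 3))) <= g_ai a i
        <= exp (c1 * Rpower (2 * INR a) (- (2 * INR i / 3))))
  (delta rho : R) (hd : 0 < delta < delta0 s c1)
  (hrho : delta / delta0 s c1 < rho < 1) :
  exists c3 : R, 0 < c3 /\
    forall (n : nat) (m : nat -> nat), (0 < n)%N -> is_partition n m ->
      L_upto s n m (delta * Rpower (INR n) (5 / 4)) <= c3 * rho ^ (n + 1).
Proof.
have HLc := Lub_Rbar_correct (fun x => exists n : nat, (0 < n)%N /\
            x = Rpower (INR n) (/ 4) * ln (/ t_n s n) * exp (c1 / 4 + 1)).
move: hd hrho HLc; rewrite /delta0.
case: (Lub_Rbar _) => [S| |] hd hrho HLc.
2,3: (case: hd => hd1 h; match type of h with _ < / real ?x => change (/ real x) with (/ 0) in h end;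
      rewrite Rinv_0 in h; lra).
rewrite /= in hd hrho.
have hS : 0 < S.
  case: (Rtotal_order S 0) => [hlt|[heq|hgt]] //.
  - have := Rinv_lt_0_compat S hlt. lra.
  - rewrite heq Rinv_0 in hd; lra.
have hub : forall n : nat, (0 < n)%N ->
    Rpower (INR n) (/ 4) * ln (/ t_n s n) * exp (c1 / 4 + 1) <= S.
  move=> n hn. have := (proj1 HLc) _ (ex_intro _ n (conj hn erefl)). by [].
have hp : delta / / S = delta * S by rewrite /Rdiv Rinv_inv.
rewrite hp in hrho.
set E1 := exp (c1 / 4 + 1).
have hE1 : 0 < E1 := exp_pos _.
set C := S / E1.
have hC : 0 < C by apply: Rdiv_lt_0_compat.
set M := exp 1 * (C * (8 * exp c1 + 1)).
have hM : 0 < M.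
  have := exp_pos 1. have := exp_pos c1. rewrite /M => h1 h2.
  apply: Rmult_lt_0_compat => //. apply: Rmult_lt_0_compat => //. lra.
have [c3 [hc3 Hc3]] := final_bound C delta (delta * S) rho M hC (proj1 hd)
  (ltac:(have := proj1 hd; nra)) (proj1 hrho) (proj2 hrho) hM.
exists c3; split => // n m hn hpart.
have hn1 : 1 <= INR n by apply: (le_INR 1); apply/leP.
set w := Rpower (INR n) (/ 4).
have hw1 : 1 <= w.
  rewrite /w -(Rpower_O (INR n)); last lra.
  apply: Rle_Rpower => //; lra.
have hw4 : w ^ 4 = INR n.
  rewrite -Rpower_pow; last lra.
  rewrite /w Rpower_mult.
  have -> : / 4 * INR 4 = 1 by simpl; field.
  apply: Rpower_1; lra.
have h54 : Rpower (INR n) (5 / 4) = INR n * w.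
  have -> : 5 / 4 = 1 + / 4 by field.
  rewrite Rpower_plus Rpower_1 //; lra.
rewrite h54.
set X := delta * (INR n * w).
have hX0 : 0 <= X.
  rewrite /X. have : 0 <= INR n * w by nra.
  have := proj1 hd. move=> h1 h2. apply: Rmult_le_pos; lra.
have [ht0 ht1] := t_facts s n hs hn.
have hl := ell_pos s n hs hn.
apply: Rle_trans; first apply: (L_bound s c1 n m X hc1 hn hpart) => //; try lra.
have hlw := hub n hn. rewrite -/w -/E1 in hlw.
set l := ln (/ t_n s n) in hlw hl *.
have hlC : l <= C / w.
  rewrite /C. apply: (Rmult_le_reg_r (w * E1)); first nra.
  have -> : S / E1 / w * (w * E1) = S by field; split; apply: Rgt_not_eq; lra.
  nra.
have hN : INR (Z.to_nat (up X)) <= X + 1 /\ 0 <= INR (Z.to_nat (up X)).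
  have [h1 h2] := archimed X.
  have hz : (0 <= up X)%Z.
    apply: le_IZR. lra.
  rewrite INR_IZR_INZ Z2Nat.id //. lra.
apply: Rle_trans; last apply: (Hc3 n w hw1 hw4).
apply: (chain l w C delta (exp (c1 / 4)) (exp c1) (delta * S) M) => //; try lra.
all: try exact: exp_pos.
all: try (by have := exp_pos c1; lra).
all: try (by rewrite /X; ring).
all: try (by rewrite /C /E1 exp_plus; field; split; apply: Rgt_not_eq; apply: exp_pos).
all: try (by case: hN).
all: try (have hXe : X = delta * INR n * w; [rewrite /X; ring | case: hN => h _; lra]).
Qed.
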